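(* Let $\Gamma\subset\mathbb{R}^2$ be a simple closed curve such that every set of $6$ points of $\Gamma$ is in c.s.c. position. Let $a\in\Gamma$ be a smooth point of $\Gamma$ with tangent line $\ell$, and let $b,c,d\in\Gamma$ be points such that $abcd$ is a non-degenerate parallelogram (with vertices in this cyclic order, so $c$ is opposite to $a$) whose sides are not parallel to $\ell$. Then the line through $c$ parallel to $\ell$ is a supporting line of $\Gamma$.
   Context: A set of points in $\mathbb{R}^2$ is in c.s.c. position if it is contained in the boundary of a centrally symmetric convex body. Under the hypothesis, $\Gamma$ is the boundary of a convex body, so at every point it has two one-sided tangent lines (the best linear approximations of $\Gamma$ at that point in the clockwise and counter-clockwise directions); a point is smooth if these coincide, and the common line is the tangent line there (equivalently, there is a unique supporting line of $\Gamma$ through that point). A supporting line of $\Gamma$ is a line meeting $\Gamma$ such that $\Gamma$ lies in one of the closed half-planes it determines. *)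

(* Defs.v *)
From Stdlib Require Import Reals.
Open Scope R_scope.

Definition pt : Type := (R * R)%type.

Definition padd (p q : pt) : pt := (fst p + fst q, snd p + snd q).
Definition psub (p q : pt) : pt := (fst p - fst q, snd p - snd q).
Definition pscale (k : R) (p : pt) : pt := (k * fst p, k * snd p).
Definition dot (p q : pt) : R := fst p * fst q + snd p * snd q.
Definition cross (p q : pt) : R := fst p * snd q - snd p * fst q.
Definition dist2 (p q : pt) : R := (fst p - fst q)^2 + (snd p - snd q)^2.

Definition interior (K : pt -> Prop) (x : pt) : Prop :=
  exists r, 0 < r /\ forall y, dist2 x y < r^2 -> K y.
Definition closure (K : pt -> Prop) (x : pt) : Prop :=
  forall r, 0 < r -> exists y, K y /\ dist2 x y < r^2.
Definition boundary (K : pt -> Prop) (x : pt) : Prop :=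
  closure K x /\ ~ interior K x.
Definition is_closed (K : pt -> Prop) : Prop :=
  forall x, closure K x -> K x.
Definition is_bounded (K : pt -> Prop) : Prop :=
  exists M, forall x, K x -> dist2 x (0,0) <= M.
Definition is_convex (K : pt -> Prop) : Prop :=
  forall x y t, K x -> K y -> 0 <= t <= 1 ->
    K (padd (pscale (1 - t) x) (pscale t y)).

Definition convex_body (K : pt -> Prop) : Prop :=
  is_convex K /\ is_closed K /\ is_bounded K /\ exists x, interior K x.

Definition centrally_symmetric (K : pt -> Prop) : Prop :=
  exists o : pt, forall x, K x -> K (psub (pscale 2 o) x).

Definition csc_position (S : pt -> Prop) : Prop :=
  exists K, convex_body K /\ centrally_symmetric K /\
    forall x, S x -> boundary K x.

Definition has_six_elements (S : pt -> Prop) : Prop :=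
  exists p1 p2 p3 p4 p5 p6 : pt,
    p1 <> p2 /\ p1 <> p3 /\ p1 <> p4 /\ p1 <> p5 /\ p1 <> p6 /\
    p2 <> p3 /\ p2 <> p4 /\ p2 <> p5 /\ p2 <> p6 /\
    p3 <> p4 /\ p3 <> p5 /\ p3 <> p6 /\
    p4 <> p5 /\ p4 <> p6 /\ p5 <> p6 /\
    forall x, S x <-> (x = p1 \/ x = p2 \/ x = p3 \/ x = p4 \/ x = p5 \/ x = p6).

(* Gamma is the image of a continuous 1-periodic map R -> R^2 that is
   injective on [0,1) (i.e. a homeomorphic image of the circle). *)
Definition simple_closed_curve (G : pt -> Prop) : Prop :=
  exists g : R -> pt,
    continuity (fun t => fst (g t)) /\ continuity (fun t => snd (g t)) /\
    (forall t, g (t + 1) = g t) /\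
    (forall s t, 0 <= s < 1 -> 0 <= t < 1 -> g s = g t -> s = t) /\
    (forall x, G x <-> exists t, x = g t).

Definition is_line (L : pt -> Prop) : Prop :=
  exists n c, n <> (0, 0) /\ forall x, L x <-> dot n x = c.

Definition supporting_line (G L : pt -> Prop) : Prop :=
  exists n c, n <> (0, 0) /\ (forall x, L x <-> dot n x = c) /\
    (exists x, G x /\ L x) /\
    ((forall y, G y -> dot n y <= c) \/ (forall y, G y -> c <= dot n y)).

(* a is a smooth point of G with tangent line L: L is the unique
   supporting line of G through a *)
Definition tangent_line_at (G : pt -> Prop) (a : pt) (L : pt -> Prop) : Prop :=
  G a /\ supporting_line G L /\ L a /\
  forall L', supporting_line G L' -> L' a -> forall x, L' x <-> L x.

Definition smooth_point (G : pt -> Prop) (a : pt) : Prop :=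
  exists L, tangent_line_at G a L.

Definition lines_parallel (L1 L2 : pt -> Prop) : Prop :=
  is_line L1 /\ is_line L2 /\ exists v, forall x, L1 x <-> L2 (padd x v).

Definition dir_parallel (u : pt) (L : pt -> Prop) : Prop :=
  forall x, L x -> L (padd x u).

Definition nondeg_parallelogram (a b c d : pt) : Prop :=
  psub b a = psub c d /\ cross (psub b a) (psub d a) <> 0.

(* Main.v *)
Require Import Defs.
From Stdlib Require Import Reals Lra Psatz Classical.
Open Scope R_scope.

Lemma half_step (K : pt -> Prop) (p e f y : pt) (dl mu A0 : R) :
  is_convex K -> 0 < dl ->
  (forall A, -dl <= A <= dl -> K (padd p (pscale A e))) ->
  K (padd p f) -> 0 <= mu -> mu < 1/2 -> A0 * A0 < dl * dl / 4 ->
  fst y = fst p + A0 * fst e + mu * fst f ->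
  snd y = snd p + A0 * snd e + mu * snd f -> K y.
Proof.
  intros Hc Hdl HA Hf Hm1 Hm2 HA0 Ey1 Ey2.
  assert (HA0' : - dl / 2 < A0 < dl / 2) by nra.
  set (A' := A0 / (1 - mu)).
  assert (EA : A' * (1 - mu) = A0) by (unfold A'; field; lra).
  assert (HA' : -dl <= A' <= dl) by (split; nra).
  pose proof (Hc _ _ mu (HA A' HA') Hf ltac:(lra)) as H.
  replace y with (padd (pscale (1 - mu) (padd p (pscale A' e))) (pscale mu (padd p f))); auto.
  destruct y as [y1 y2]; simpl in *; unfold padd, pscale; simpl.
  f_equal; rewrite ?Ey1, ?Ey2, <- EA; ring.
Qed.

Lemma one_side (K : pt -> Prop) (p e f y : pt) (dl M m : R) :
  is_convex K -> 0 < dl ->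
  (forall A, -dl <= A <= dl -> K (padd p (pscale A e))) ->
  K (padd p f) -> cross e f <> 0 ->
  0 <= cross e f * (fst e * (snd y - snd p) - snd e * (fst y - fst p)) ->
  ((fst y - fst p)^2 + (snd y - snd p)^2) * M < m ->
  m <= cross e f * cross e f / 4 ->
  m <= dl * dl / 4 * (cross e f * cross e f) ->
  dot e e <= M -> dot f f <= M -> K y.
Proof.
  destruct p as [p1 p2], e as [e1 e2], f as [f1 f2], y as [y1 y2].
  unfold cross, dot; simpl.
  intros Hc Hdl HA Hf Hcf Hs Hh Hm1 Hm2 He Hff.
  set (cf := e1 * f2 - e2 * f1) in *.
  set (h1 := y1 - p1) in *. set (h2 := y2 - p2) in *.
  set (ce := e1 * h2 - e2 * h1) in *.
  set (hh := h1^2 + h2^2) in *.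
  assert (Hhh : 0 <= hh) by (unfold hh; nra).
  assert (Lag1 : ce * ce <= (e1*e1 + e2*e2) * hh).
  { assert (E : ce * ce + (e1*h1 + e2*h2)*(e1*h1+e2*h2) = (e1*e1 + e2*e2) * hh)
      by (unfold ce, hh; ring).
    pose proof (Rle_0_sqr (e1*h1 + e2*h2)) as Q; unfold Rsqr in Q. lra. }
  assert (Lag2 : (h1 * f2 - h2 * f1) * (h1 * f2 - h2 * f1) <= (f1*f1 + f2*f2) * hh).
  { assert (E : (h1 * f2 - h2 * f1) * (h1 * f2 - h2 * f1) + (f1*h1 + f2*h2)*(f1*h1+f2*h2) = (f1*f1 + f2*f2) * hh)
      by (unfold hh; ring).
    pose proof (Rle_0_sqr (f1*h1 + f2*h2)) as Q; unfold Rsqr in Q. lra. }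
  assert (P1 : (e1*e1+e2*e2) * hh <= M * hh) by (apply Rmult_le_compat_r; lra).
  assert (P2 : (f1*f1+f2*f2) * hh <= M * hh) by (apply Rmult_le_compat_r; lra).
  assert (Hh' : hh * M < m) by (unfold hh; replace (h1^2+h2^2) with (h1*(h1*1)+h2*(h2*1)) by ring; exact Hh).
  assert (B1 : ce * ce < cf * cf / 4) by lra.
  assert (B2 : (h1 * f2 - h2 * f1) * (h1 * f2 - h2 * f1) < dl * dl / 4 * (cf * cf)) by lra.
  assert (Hcf2 : 0 < cf * cf) by (apply Rsqr_pos_lt in Hcf; unfold Rsqr in Hcf; lra).
  set (mu := ce / cf). set (A0 := (h1 * f2 - h2 * f1) / cf).
  assert (Emu : mu * cf = ce) by (unfold mu; field; auto).
  assert (EA0 : A0 * cf = h1 * f2 - h2 * f1) by (unfold A0; field; auto).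
  assert (Hmu0 : 0 <= mu) by nra.
  assert (Hmu1 : mu < 1/2).
  { assert (X : mu * mu * (cf * cf) < cf * cf / 4)
      by (replace (mu * mu * (cf * cf)) with ((mu * cf) * (mu * cf)) by ring; rewrite Emu; lra).
    destruct (Rlt_or_le mu (1/2)); auto.
    assert (1/4 * (cf * cf) <= mu * mu * (cf * cf)) by (apply Rmult_le_compat_r; nra). lra. }
  assert (HA0 : A0 * A0 < dl * dl / 4).
  { assert (X : A0 * A0 * (cf * cf) < dl * dl / 4 * (cf * cf))
      by (replace (A0 * A0 * (cf * cf)) with ((A0 * cf) * (A0 * cf)) by ring; rewrite EA0; lra).
    destruct (Rlt_or_le (A0 * A0) (dl * dl / 4)); auto.
    assert (dl * dl / 4 * (cf * cf) <= A0 * A0 * (cf * cf)) by (apply Rmult_le_compat_r; lra). lra. }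
  apply (half_step K (p1,p2) (e1,e2) (f1,f2) (y1,y2) dl mu A0); auto; simpl.
  - apply (Rmult_eq_reg_r cf); auto.
    replace ((p1 + A0 * e1 + mu * f1) * cf) with (p1 * cf + (A0 * cf) * e1 + (mu * cf) * f1) by ring.
    rewrite Emu, EA0. unfold ce, cf, h1, h2. ring.
  - apply (Rmult_eq_reg_r cf); auto.
    replace ((p2 + A0 * e2 + mu * f2) * cf) with (p2 * cf + (A0 * cf) * e2 + (mu * cf) * f2) by ring.
    rewrite Emu, EA0. unfold ce, cf, h1, h2. ring.
Qed.

Lemma interior_core (K : pt -> Prop) (p e f g : pt) (dl : R) :
  is_convex K -> 0 < dl ->
  (forall A, -dl <= A <= dl -> K (padd p (pscale A e))) ->
  K (padd p f) -> K (padd p g) -> cross e f * cross e g < 0 -> Defs.interior K p.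
Proof.
  intros Hc Hdl HA Hf Hg Hfg.
  set (cf := cross e f) in *. set (cg := cross e g) in *.
  assert (Hcf : cf <> 0) by (intro E; rewrite E in Hfg; lra).
  assert (Hcg : cg <> 0) by (intro E; rewrite E in Hfg; lra).
  assert (Pcf : 0 < cf * cf) by (apply Rsqr_pos_lt in Hcf; unfold Rsqr in Hcf; lra).
  assert (Pcg : 0 < cg * cg) by (apply Rsqr_pos_lt in Hcg; unfold Rsqr in Hcg; lra).
  assert (Pe : 0 <= dot e e) by (unfold dot; nra).
  assert (Pf : 0 <= dot f f) by (unfold dot; nra).
  assert (Pg : 0 <= dot g g) by (unfold dot; nra).
  set (M := 1 + dot e e + dot f f + dot g g).
  assert (HM : 0 < M) by (unfold M; lra).
  set (m := Rmin (dl * dl / 4) (1/4) * Rmin (cf * cf) (cg * cg)).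
  assert (Hm1 : 0 < Rmin (dl * dl / 4) (1/4)) by (apply Rmin_pos; nra).
  assert (Hm2 : 0 < Rmin (cf * cf) (cg * cg)) by (apply Rmin_pos; nra).
  assert (Hm : 0 < m) by (unfold m; nra).
  exists (Rmin 1 (m / M)). split.
  { apply Rmin_pos; [lra | apply Rdiv_lt_0_compat; lra]. }
  intros y Hy.
  set (r := Rmin 1 (m / M)) in *.
  assert (Hr0 : 0 < r) by (apply Rmin_pos; [lra | apply Rdiv_lt_0_compat; lra]).
  assert (Hr1 : r <= 1) by apply Rmin_l.
  assert (Hr2 : r <= m / M) by apply Rmin_r.
  assert (Hr : r ^ 2 <= m / M) by nra.
  assert (Hhh : ((fst y - fst p)^2 + (snd y - snd p)^2) * M < m).
  { unfold dist2 in Hy.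
    replace ((fst y - fst p)^2 + (snd y - snd p)^2) with ((fst p - fst y)^2 + (snd p - snd y)^2) by ring.
    apply (Rmult_lt_compat_r M) in Hy; auto.
    assert (m / M * M = m) by (field; lra). nra. }
  assert (Q1 : Rmin (dl * dl / 4) (1/4) <= dl * dl / 4) by apply Rmin_l.
  assert (Q2 : Rmin (dl * dl / 4) (1/4) <= 1/4) by apply Rmin_r.
  assert (Q3 : Rmin (cf * cf) (cg * cg) <= cf * cf) by apply Rmin_l.
  assert (Q4 : Rmin (cf * cf) (cg * cg) <= cg * cg) by apply Rmin_r.
  set (ce := fst e * (snd y - snd p) - snd e * (fst y - fst p)).
  assert (R1 : m <= cf * cf / 4) by (unfold m; replace (cf*cf/4) with (1/4 * (cf * cf)) by field; apply Rmult_le_compat; lra).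
  assert (R2 : m <= dl * dl / 4 * (cf * cf)) by (unfold m; apply Rmult_le_compat; lra).
  assert (R3 : m <= cg * cg / 4) by (unfold m; replace (cg*cg/4) with (1/4 * (cg * cg)) by field; apply Rmult_le_compat; lra).
  assert (R4 : m <= dl * dl / 4 * (cg * cg)) by (unfold m; apply Rmult_le_compat; lra).
  clearbody m.
  destruct (Rle_or_lt 0 (cf * ce)) as [Hs | Hs].
  - apply (one_side K p e f y dl M m); auto; unfold M in *; try lra.
  - apply (one_side K p e g y dl M m); try change (cross e g) with cg; auto; unfold M in *; try lra.
    assert (X : 0 < (-(cf * ce)) * (-(cf * cg))) by (apply Rmult_lt_0_compat; lra).
    replace ((-(cf * ce)) * (-(cf * cg))) with ((cf * cf) * (cg * ce)) in X by ring.
    destruct (Rle_or_lt 0 (cg * ce)); auto.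
    assert ((cf * cf) * (cg * ce) <= 0). { rewrite <- (Rmult_0_r (cf*cf)). apply Rmult_le_compat_l; lra. } lra.
Qed.

Lemma seg_interior (K : pt -> Prop) (x1 x2 x3 x4 : pt) (lam : R) :
  is_convex K -> K x1 -> K x2 -> K x3 -> K x4 -> 0 < lam < 1 ->
  cross (psub x2 x1) (psub x3 (padd (pscale (1-lam) x1) (pscale lam x2))) *
  cross (psub x2 x1) (psub x4 (padd (pscale (1-lam) x1) (pscale lam x2))) < 0 ->
  Defs.interior K (padd (pscale (1-lam) x1) (pscale lam x2)).
Proof.
  intros Hc H1 H2 H3 H4 Hl Hx.
  apply (interior_core K _ (psub x2 x1) (psub x3 (padd (pscale (1-lam) x1) (pscale lam x2))) (psub x4 (padd (pscale (1-lam) x1) (pscale lam x2))) (Rmin lam (1-lam)) Hc); [ | | | | exact Hx].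
  - apply Rmin_pos; lra.
  - intros A HA. pose proof (Rmin_l lam (1-lam)). pose proof (Rmin_r lam (1-lam)).
    replace (padd (padd (pscale (1 - lam) x1) (pscale lam x2)) (pscale A (psub x2 x1)))
      with (padd (pscale (1 - (lam + A)) x1) (pscale (lam + A) x2)).
    + apply Hc; auto; lra.
    + destruct x1, x2; unfold padd, pscale, psub; simpl; f_equal; ring.
  - replace (padd _ _) with x3; auto. destruct x1, x2, x3; unfold padd, pscale, psub; simpl; f_equal; ring.
  - replace (padd _ _) with x4; auto. destruct x1, x2, x4; unfold padd, pscale, psub; simpl; f_equal; ring.
Qed.

Definition P (a u v : pt) (s t : R) : pt :=
  (fst a + s * fst u + t * fst v, snd a + s * snd u + t * snd v).

Lemma segst (K : pt -> Prop) (a u v : pt) (s1 t1 s2 t2 s3 t3 s4 t4 lam es et kap ps pt0 : R) :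
  is_convex K -> cross u v <> 0 ->
  K (P a u v s1 t1) -> K (P a u v s2 t2) -> K (P a u v s3 t3) -> K (P a u v s4 t4) ->
  0 < lam < 1 -> ps = s1 + lam * (s2 - s1) -> pt0 = t1 + lam * (t2 - t1) ->
  s2 - s1 = kap * es -> t2 - t1 = kap * et -> kap <> 0 ->
  (es * (t3 - pt0) - et * (s3 - ps)) * (es * (t4 - pt0) - et * (s4 - ps)) < 0 ->
  Defs.interior K (P a u v ps pt0).
Proof.
  intros Hc HD H1 H2 H3 H4 Hl Eps Ept E1 E2 Hk Hx.
  replace (P a u v ps pt0) with (padd (pscale (1-lam) (P a u v s1 t1)) (pscale lam (P a u v s2 t2))).
  2:{ unfold P, padd, pscale; simpl; f_equal; subst; ring. }
  apply (seg_interior K _ _ (P a u v s3 t3) (P a u v s4 t4)); auto.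
  set (q := padd (pscale (1-lam) (P a u v s1 t1)) (pscale lam (P a u v s2 t2))).
  assert (Eq : q = P a u v ps pt0) by (unfold q, P, padd, pscale; simpl; f_equal; subst; ring).
  rewrite Eq.
  assert (C : forall s t, cross (psub (P a u v s2 t2) (P a u v s1 t1)) (psub (P a u v s t) (P a u v ps pt0))
      = cross u v * kap * (es * (t - pt0) - et * (s - ps))).
  { intros s t. rewrite Rmult_assoc.
    replace (kap * (es * (t - pt0) - et * (s - ps))) with ((s2 - s1) * (t - pt0) - (t2 - t1) * (s - ps))
      by (rewrite E1, E2; ring).
    unfold cross, psub, P; simpl. ring. }
  rewrite !C.
  assert (0 < (cross u v * kap) * (cross u v * kap)).
  { assert (cross u v * kap <> 0) by (apply Rmult_integral_contrapositive; auto).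
    apply Rsqr_pos_lt in H. unfold Rsqr in H. lra. }
  replace (cross u v * kap * (es * (t3 - pt0) - et * (s3 - ps)) *
           (cross u v * kap * (es * (t4 - pt0) - et * (s4 - ps))))
    with ((cross u v * kap) * (cross u v * kap) * ((es * (t3 - pt0) - et * (s3 - ps)) * (es * (t4 - pt0) - et * (s4 - ps)))) by ring.
  rewrite <- (Rmult_0_r ((cross u v * kap) * (cross u v * kap))).
  apply Rmult_lt_compat_l; auto.
Qed.

Lemma fr01 a b : (0 < b /\ 0 <= a <= b) \/ (b < 0 /\ b <= a <= 0) -> 0 <= a / b <= 1.
Proof.
  intros [[Hb Ha] | [Hb Ha]].
  - split. apply Rmult_le_pos; [lra | left; apply Rinv_0_lt_compat; lra].
    apply (Rmult_le_reg_r b); auto. field_simplify; lra.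
  - replace (a / b) with ((-a) / (-b)) by (field; lra).
    split. apply Rmult_le_pos; [lra | left; apply Rinv_0_lt_compat; lra].
    apply (Rmult_le_reg_r (-b)); [lra|]. field_simplify; lra.
Qed.

Lemma fr01s a b : (0 < b /\ 0 < a < b) \/ (b < 0 /\ b < a < 0) -> 0 < a / b < 1.
Proof.
  intros [[Hb Ha] | [Hb Ha]].
  - split. apply Rdiv_lt_0_compat; lra.
    apply (Rmult_lt_reg_r b); auto. field_simplify; lra.
  - replace (a / b) with ((-a) / (-b)) by (field; lra).
    split. apply Rdiv_lt_0_compat; lra.
    apply (Rmult_lt_reg_r (-b)); [lra|]. field_simplify; lra.
Qed.

Lemma inv_pos x : 0 < x -> 0 < 1 / x.
Proof. intros; apply Rdiv_lt_0_compat; lra. Qed.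
Lemma inv_neg x : x < 0 -> 1 / x < 0.
Proof. intros. replace (1/x) with (-(1/(-x))) by (field; lra).
  pose proof (inv_pos (-x)). lra. Qed.

Lemma inv01 x : 1 < x -> 0 < 1 / x < 1.
Proof. intros. apply fr01s. left. lra. Qed.

Ltac fe := field; repeat split; lra.

Lemma analysis (Q I : R -> R -> Prop) (os ot sy ty sz tz al be : R)
 (SEG : forall s1 t1 s2 t2 s3 t3 s4 t4 lam es et kap ps pt, Q s1 t1 -> Q s2 t2 -> Q s3 t3 -> Q s4 t4 ->
     0 < lam < 1 -> ps = s1 + lam * (s2 - s1) -> pt = t1 + lam * (t2 - t1) ->
     s2 - s1 = kap * es -> t2 - t1 = kap * et -> kap <> 0 ->
     (es * (t3 - pt) - et * (s3 - ps)) * (es * (t4 - pt) - et * (s4 - ps)) < 0 -> I ps pt)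
 (COMB : forall s1 t1 s2 t2 l, Q s1 t1 -> Q s2 t2 -> 0 <= l <= 1 ->
     Q ((1 - l) * s1 + l * s2) ((1 - l) * t1 + l * t2))
 (SYM : forall s t, Q s t -> Q (2 * os - s) (2 * ot - t))
 (Qa : Q 0 0) (Qb : Q 1 0) (Qc : Q 1 1) (Qd : Q 0 1) (Qy : Q sy ty) (Qz : Q sz tz)
 (Ia : ~ I 0 0) (Ib : ~ I 1 0) (Ic : ~ I 1 1) (Id : ~ I 0 1)
 (Hal : al < 0) (Hbe : be < 0) (Hz : al * sz + be * tz <= 0) (Hsy : sy > 1)
 (Hy : al * (1 - sy) + be * (1 - ty) > 0) (Htz : tz < 0)
 (Hh : 0 <= 1 - ty -> (1 - sy) * tz - (1 - ty) * sz > 0) : False.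
Proof.
  remember (2 * os - 1) as ws. remember (2 * ot - 1) as wt.
  assert (Eos : os = (1 + ws) / 2) by lra. assert (Eot : ot = (1 + wt) / 2) by lra.
  clear Heqws Heqwt. subst os ot.
  pose proof (SYM _ _ Qa) as Ra. pose proof (SYM _ _ Qb) as Rb.
  pose proof (SYM _ _ Qc) as Rc. pose proof (SYM _ _ Qd) as Rd.
  pose proof (SYM _ _ Qy) as Ry.
  destruct (Req_dec ws 0) as [Hws | Hws]; destruct (Req_dec wt 0) as [Hwt | Hwt].
  -
    subst ws wt.
    assert (Ry' : Q (1 - sy) (1 - ty)) by (replace (1 - sy) with (2 * ((1 + 0) / 2) - sy) by field;
       replace (1 - ty) with (2 * ((1 + 0) / 2) - ty) by field; exact Ry).
    clear Ry.
    destruct (Rlt_or_le (1 - ty) 0) as [Hq | Hq].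
    + apply Ia.
      assert (Hpq : (1 - sy) + (1 - ty) < 0) by lra.
      pose proof (COMB _ _ _ _ ((1 - ty) / ((1 - sy) + (1 - ty))) Qb Qd
         ltac:(apply fr01; right; lra)) as Rr.
      eapply (SEG _ _ _ _ _ _ _ _ (((1 - sy) + (1 - ty)) / ((1 - sy) + (1 - ty) - 1)) (1 - sy) (1 - ty)
               (1 / ((1 - sy) + (1 - ty)) - 1) 0 0 Ry' Rr Qb Qd).
      * apply fr01s; right; lra.
      * fe.
      * fe.
      * fe.
      * fe.
      * pose proof (inv_neg _ Hpq). lra.
      * nra.
    + apply Ia.
      specialize (Hh Hq).
      set (h := (1 - sy) * tz - (1 - ty) * sz) in *.
      assert (Hsz : sz > 0) by nra.
      set (l := (1 - sy) / ((1 - sy) - h)).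
      assert (Hl : 0 < l < 1) by (apply fr01s; right; lra).
      assert (El : l * ((1 - sy) - h) = 1 - sy) by (unfold l; field; lra).
      clearbody l.
      assert (Rr : Q (l * sz) (1 - l + l * tz)).
      { replace (l * sz) with ((1 - l) * 0 + l * sz) by ring.
        replace (1 - l + l * tz) with ((1 - l) * 1 + l * tz) by ring.
        apply COMB; auto; lra. }
      assert (Hrs : l * sz > 0) by nra.
      assert (Key : (1 - sy) * (1 - l + l * tz) = (1 - ty) * (l * sz)).
      { unfold h in El. nra. }
      set (lam := (1 - sy) / ((1 - sy) - l * sz)).
      assert (Hlam : 0 < lam < 1) by (apply fr01s; right; lra).
      assert (Elam : lam * ((1 - sy) - l * sz) = 1 - sy) by (unfold lam; field; lra).
      clearbody lam.
      eapply (SEG _ _ _ _ _ _ _ _ lam (1 - sy) (1 - ty) ((l * sz - (1 - sy)) / (1 - sy)) 0 0 Ry' Rr Qz Qd).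
      * exact Hlam.
      * nra.
      * apply (Rmult_eq_reg_r (1 - sy)); [|lra].
        replace ((1 - ty + lam * (1 - l + l * tz - (1 - ty))) * (1 - sy))
          with ((1 - ty) * (1 - sy) + lam * ((1 - sy) * (1 - l + l * tz)) - lam * (1 - ty) * (1 - sy)) by ring.
        rewrite Key.
        replace ((1 - ty) * (1 - sy) + lam * ((1 - ty) * (l * sz)) - lam * (1 - ty) * (1 - sy))
          with ((1 - ty) * ((1 - sy) - lam * ((1 - sy) - l * sz))) by ring.
        rewrite Elam. ring.
      * field. lra.
      * apply (Rmult_eq_reg_r (1 - sy)); [|lra].
        replace ((l * sz - (1 - sy)) / (1 - sy) * (1 - ty) * (1 - sy))
          with ((l * sz - (1 - sy)) * (1 - ty)) by (field; lra).
        replace ((1 - l + l * tz - (1 - ty)) * (1 - sy)) with ((1 - sy) * (1 - l + l * tz) - (1 - ty) * (1 - sy)) by ring.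
        rewrite Key. ring.
      * intro E. assert (E2 : (l * sz - (1 - sy)) / (1 - sy) * (1 - sy) = l * sz - (1 - sy)) by (field; lra).
        rewrite E in E2. lra.
      * replace (((1 - sy) * (tz - 0) - (1 - ty) * (sz - 0)) * ((1 - sy) * (1 - 0) - (1 - ty) * (0 - 0)))
          with (h * (1 - sy)) by (unfold h; ring).
        nra.
  -
    subst ws.
    destruct (Rlt_or_le 0 wt) as [Hw | Hw].
    + apply Id.
      eapply (SEG _ _ _ _ _ _ _ _ (1 / (1 + wt)) 0 1 (1 + wt) 0 1 Qa Rb Qb Ry).
      * apply inv01 ; lra.
      * fe. * fe. * fe. * fe. * lra.
      * nra.
    + apply Ia.
      eapply (SEG _ _ _ _ _ _ _ _ (1 / (1 - wt)) 0 1 (wt - 1) 0 0 Qd Rc Qb Ry).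
      * apply inv01 ; lra.
      * fe. * fe. * fe. * fe. * lra.
      * nra.
  -
    subst wt.
    destruct (Rlt_or_le 0 ws) as [Hw | Hw].
    + apply Ib.
      eapply (SEG _ _ _ _ _ _ _ _ (1 / (1 + ws)) 1 0 (1 + ws) 1 0 Qa Rd Qz Qd).
      * apply inv01 ; lra.
      * fe. * fe. * fe. * fe. * lra.
      * nra.
    + apply Ia.
      eapply (SEG _ _ _ _ _ _ _ _ (1 / (1 - ws)) 1 0 (ws - 1) 0 0 Qb Rc Qz Qd).
      * apply inv01 ; lra.
      * fe. * fe. * fe. * fe. * lra.
      * nra.
  - destruct (Rlt_or_le 0 ws) as [Hs | Hs]; destruct (Rlt_or_le 0 wt) as [Ht | Ht].
    + apply Ic.
      pose proof (COMB _ _ _ _ (ws / (ws + wt)) Qb Qd ltac:(apply fr01; left; lra)) as Rr.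
      eapply (SEG _ _ _ _ _ _ _ _ (1 / (1 + ws + wt)) ws wt (1 + 1 / (ws + wt)) 1 1 Rr Ra Qb Qd).
      * apply inv01; lra.
      * fe. * fe. * fe. * fe.
      * pose proof (inv_pos (ws + wt)); lra.
      * nra.
    + apply Ib.
      pose proof (COMB _ _ _ _ (- wt / (ws - wt)) Qa Qc ltac:(apply fr01; left; lra)) as Rr.
      eapply (SEG _ _ _ _ _ _ _ _ (1 / (1 + ws - wt)) ws wt (1 + 1 / (ws - wt)) 1 0 Rr Rd Qa Qc).
      * apply inv01; lra.
      * fe. * fe. * fe. * fe.
      * pose proof (inv_pos (ws - wt)); lra.
      * nra.
    + apply Id.
      pose proof (COMB _ _ _ _ (- ws / (wt - ws)) Qa Qc ltac:(apply fr01; left; lra)) as Rr.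
      eapply (SEG _ _ _ _ _ _ _ _ (1 / (1 + wt - ws)) ws wt (1 + 1 / (wt - ws)) 0 1 Rr Rb Qa Qc).
      * apply inv01; lra.
      * fe. * fe. * fe. * fe.
      * pose proof (inv_pos (wt - ws)); lra.
      * nra.
    + apply Ia.
      pose proof (COMB _ _ _ _ (wt / (ws + wt)) Qb Qd ltac:(apply fr01; right; lra)) as Rr.
      eapply (SEG _ _ _ _ _ _ _ _ (1 / (1 - ws - wt)) ws wt (1 - 1 / (ws + wt)) 0 0 Rr Rc Qb Qd).
      * apply inv01; lra.
      * fe. * fe. * fe. * fe.
      * pose proof (inv_neg (ws + wt)); lra.
      * nra.
Qed.

Lemma coords_ex a u v x : cross u v <> 0 -> exists s t, x = P a u v s t.
Proof.
  intros HD. exists (cross (psub x a) v / cross u v), (cross u (psub x a) / cross u v).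
  destruct x as [x1 x2], a as [a1 a2], u as [u1 u2], v as [v1 v2].
  unfold cross, psub, P in *; simpl in *. f_equal; field; auto.
Qed.

Lemma P_inj a u v s t s' t' : cross u v <> 0 -> P a u v s t = P a u v s' t' -> s = s' /\ t = t'.
Proof.
  intros HD E. unfold P in E. injection E as E1 E2.
  assert (X1 : (s - s') * cross u v = 0).
  { unfold cross.
    replace ((s - s') * (fst u * snd v - snd u * fst v)) with
      ((fst a + s * fst u + t * fst v - (fst a + s' * fst u + t' * fst v)) * snd v
       - (snd a + s * snd u + t * snd v - (snd a + s' * snd u + t' * snd v)) * fst v
       - (t - t') * (fst v * snd v - snd v * fst v)) by ring.
    rewrite E1, E2. ring. }
  assert (X2 : (t - t') * cross u v = 0).
  { unfold cross.
    replace ((t - t') * (fst u * snd v - snd u * fst v)) with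
      ((snd a + s * snd u + t * snd v - (snd a + s' * snd u + t' * snd v)) * fst u
       - (fst a + s * fst u + t * fst v - (fst a + s' * fst u + t' * fst v)) * snd u) by ring.
    rewrite E1, E2. ring. }
  apply Rmult_integral in X1. apply Rmult_integral in X2.
  split; [destruct X1 | destruct X2]; try lra; contradiction.
Qed.

Lemma dot_P n a u v s t : dot n (P a u v s t) = dot n a + s * dot n u + t * dot n v.
Proof. unfold dot, P; simpl; ring. Qed.

Lemma P00 a u v : P a u v 0 0 = a.
Proof. destruct a; unfold P; simpl; f_equal; ring. Qed.

Lemma P_swap a u v s t : P a v u s t = P a u v t s.
Proof. unfold P; f_equal; ring. Qed.

Lemma refl_P a u v os ot s t :
  psub (pscale 2 (P a u v os ot)) (P a u v s t) = P a u v (2 * os - s) (2 * ot - t).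
Proof. unfold psub, pscale, P; simpl; f_equal; ring. Qed.

Lemma comb_P a u v s1 t1 s2 t2 l :
  padd (pscale (1 - l) (P a u v s1 t1)) (pscale l (P a u v s2 t2)) =
  P a u v ((1 - l) * s1 + l * s2) ((1 - l) * t1 + l * t2).
Proof. unfold padd, pscale, P; simpl; f_equal; ring. Qed.

Lemma cross_P a u v e s t :
  cross e (psub (P a u v s t) a) = s * cross e u + t * cross e v.
Proof. unfold cross, psub, P; simpl; ring. Qed.

Lemma smooth_sides (G l : pt -> Prop) a n k (e : pt) :
  tangent_line_at G a l -> (forall x, l x <-> dot n x = k) -> dot n e <> 0 ->
  (exists z, G z /\ cross e (psub z a) > 0) /\ (exists z, G z /\ cross e (psub z a) < 0).
Proof.
  intros [Ga [_ [la Huniq]]] Hl He.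
  set (n' := (- snd e, fst e)).
  set (L' := fun x => dot n' x = dot n' a).
  assert (Ecr : forall x, dot n' x - dot n' a = cross e (psub x a)).
  { intros. unfold n', dot, cross, psub; simpl; ring. }
  assert (Hns : ~ supporting_line G L').
  { intro Hs. specialize (Huniq L' Hs eq_refl (padd a e)).
    assert (HL : L' (padd a e)) by (unfold L', n', dot, padd; simpl; ring).
    apply Huniq in HL. apply Hl in HL. apply Hl in la.
    apply He. unfold dot, padd in *; simpl in *. lra. }
  assert (Hn' : n' <> (0, 0)).
  { intro E. unfold n' in E. injection E as E1 E2. apply He. unfold dot.
    replace (snd e) with 0 by lra. rewrite E2. ring. }
  split.
  - destruct (classic (exists z, G z /\ cross e (psub z a) > 0)) as [H | H]; auto.
    exfalso. apply Hns. exists n', (dot n' a). repeat split; auto.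
    + exists a. split; auto. reflexivity.
    + left. intros y Gy. destruct (Rle_or_lt (dot n' y) (dot n' a)); auto.
      exfalso; apply H. exists y. split; auto. rewrite <- Ecr. lra.
  - destruct (classic (exists z, G z /\ cross e (psub z a) < 0)) as [H | H]; auto.
    exfalso. apply Hns. exists n', (dot n' a). repeat split; auto.
    + exists a. split; auto. reflexivity.
    + right. intros y Gy. destruct (Rle_or_lt (dot n' a) (dot n' y)); auto.
      exfalso; apply H. exists y. split; auto. rewrite <- Ecr. lra.
Qed.

Lemma final (G : pt -> Prop) a u v sy ty sz tz al be :
  (forall S : pt -> Prop, (forall x, S x -> G x) -> has_six_elements S -> csc_position S) ->
  cross u v <> 0 -> G a -> G (P a u v 1 0) -> G (P a u v 1 1) -> G (P a u v 0 1) ->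
  G (P a u v sy ty) -> G (P a u v sz tz) -> al < 0 -> be < 0 -> al * sz + be * tz <= 0 ->
  sy > 1 -> al * (1 - sy) + be * (1 - ty) > 0 -> tz < 0 ->
  (0 <= 1 - ty -> (1 - sy) * tz - (1 - ty) * sz > 0) -> False.
Proof.
  intros H6 HD Ga Gb Gc Gd Gy Gz Hal Hbe Hz Hsy Hy Htz Hh.
  set (S := fun x => x = P a u v 0 0 \/ x = P a u v 1 0 \/ x = P a u v 1 1 \/
                     x = P a u v 0 1 \/ x = P a u v sy ty \/ x = P a u v sz tz).
  assert (Hsub : forall x, S x -> G x).
  { intros x [E|[E|[E|[E|[E|E]]]]]; rewrite E; auto. rewrite P00; auto. }
  assert (Hsix : has_six_elements S).
  { exists (P a u v 0 0), (P a u v 1 0), (P a u v 1 1), (P a u v 0 1), (P a u v sy ty), (P a u v sz tz).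
    repeat split;
      try (intro E; apply P_inj in E; [destruct E; lra | assumption]).
    + intro E; apply P_inj in E; [|assumption]. destruct E as [E1 E2]. subst.
      specialize (Hh ltac:(lra)). nra.
    + intro Hx; exact Hx.
    + intro Hx; exact Hx. }
  destruct (H6 S Hsub Hsix) as [K [[Kc [Kcl _]] [[o Ho] HB]]].
  { assert (B : forall x, S x -> K x /\ ~ Defs.interior K x).
    { intros x Sx. destruct (HB x Sx) as [Hc Hi]. split; auto. }
    destruct (coords_ex a u v o HD) as [os [ot Eo]].
    apply (analysis (fun s t => K (P a u v s t)) (fun s t => Defs.interior K (P a u v s t))
             os ot sy ty sz tz al be); auto.
    + intros s1 t1 s2 t2 s3 t3 s4 t4 lam es et kap ps pt0 H1 H2 H3 H4 H5 H7 H8 H9 H10 H11 H12.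
      exact (segst K a u v s1 t1 s2 t2 s3 t3 s4 t4 lam es et kap ps pt0 Kc HD H1 H2 H3 H4 H5 H7 H8 H9 H10 H11 H12).
    + intros. rewrite <- comb_P. apply Kc; auto.
    + intros. rewrite <- refl_P. rewrite <- Eo. apply Ho. auto.
    + apply B; unfold S; auto.
    + apply B; unfold S; auto.
    + apply B; unfold S; auto 6.
    + apply B; unfold S; auto 6.
    + apply B; unfold S; auto 6.
    + apply B; unfold S; auto 7.
    + apply B; unfold S; auto 6.
    + apply B; unfold S; auto 6.
    + apply B; unfold S; auto 6.
    + apply B; unfold S; auto 6. }
Qed.

Lemma key_st (G l : pt -> Prop) a u v n k sy ty :
  (forall S : pt -> Prop, (forall x, S x -> G x) -> has_six_elements S -> csc_position S) ->
  tangent_line_at G a l -> (forall x, l x <-> dot n x = k) -> (forall x, G x -> dot n x <= k) ->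
  cross u v <> 0 -> G (P a u v 1 0) -> G (P a u v 1 1) -> G (P a u v 0 1) ->
  dot n u <> 0 -> dot n v <> 0 -> G (P a u v sy ty) ->
  dot n (P a u v sy ty) < dot n (P a u v 1 1) -> sy > 1 -> False.
Proof.
  intros H6 Htan Hl Hside HD Gb Gc Gd Hu Hv Gy Hyc Hsy.
  pose proof Htan as [Ga [_ [la _]]].
  apply Hl in la.
  set (al := dot n u) in *. set (be := dot n v) in *.
  assert (Hal : al < 0).
  { pose proof (Hside _ Gb) as X. rewrite dot_P in X. fold al be in X.
    destruct (Rle_or_lt 0 al); [destruct H; [lra | congruence] | lra]. }
  assert (Hbe : be < 0).
  { pose proof (Hside _ Gd) as X. rewrite dot_P in X. fold al be in X.
    destruct (Rle_or_lt 0 be); [destruct H; [lra | congruence] | lra]. }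
  rewrite !dot_P in Hyc. fold al be in Hyc.
  assert (Hy : al * (1 - sy) + be * (1 - ty) > 0) by lra.
  assert (Gside : forall s t, G (P a u v s t) -> al * s + be * t <= 0).
  { intros s t Gs. pose proof (Hside _ Gs) as X. rewrite dot_P in X. fold al be in X. lra. }
  destruct (Rlt_or_le (1 - ty) 0) as [Hq | Hq].
  - destruct (smooth_sides G l a n k u Htan Hl Hu) as [[z1 [G1 C1]] [z2 [G2 C2]]].
    assert (Hz : exists sz tz, G (P a u v sz tz) /\ tz < 0).
    { destruct (Rlt_or_le 0 (cross u v)) as [Dp | Dn].
      - destruct (coords_ex a u v z2 HD) as [sz [tz E]]. subst z2.
        rewrite cross_P in C2. exists sz, tz. split; auto.
        replace (cross u u) with 0 in C2 by (unfold cross; ring). nra.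
      - destruct (coords_ex a u v z1 HD) as [sz [tz E]]. subst z1.
        rewrite cross_P in C1. exists sz, tz. split; auto.
        replace (cross u u) with 0 in C1 by (unfold cross; ring).
        destruct Dn; [nra | contradiction]. }
    destruct Hz as [sz [tz [Gz Htz]]].
    apply (final G a u v sy ty sz tz al be); auto. intro; lra.
  - set (e := ((1 - sy) * fst u + (1 - ty) * fst v, (1 - sy) * snd u + (1 - ty) * snd v)).
    assert (He : dot n e <> 0).
    { replace (dot n e) with ((1 - sy) * al + (1 - ty) * be) by (unfold e, al, be, dot; simpl; ring). lra. }
    assert (Ce : forall s t, cross e (psub (P a u v s t) a) = cross u v * ((1 - sy) * t - (1 - ty) * s)).
    { intros. unfold e, cross, psub, P; simpl; ring. }
    destruct (smooth_sides G l a n k e Htan Hl He) as [[z1 [G1 C1]] [z2 [G2 C2]]].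
    assert (Hz : exists sz tz, G (P a u v sz tz) /\ (1 - sy) * tz - (1 - ty) * sz > 0).
    { destruct (Rlt_or_le 0 (cross u v)) as [Dp | Dn].
      - destruct (coords_ex a u v z1 HD) as [sz [tz E]]. subst z1.
        rewrite Ce in C1. exists sz, tz. split; auto. nra.
      - destruct (coords_ex a u v z2 HD) as [sz [tz E]]. subst z2.
        rewrite Ce in C2. exists sz, tz. split; auto.
        destruct Dn; [nra | contradiction]. }
    destruct Hz as [sz [tz [Gz Hh]]].
    pose proof (Gside _ _ Gz) as Hzs.
    assert (Htz : tz < 0).
    { destruct (Rlt_or_le tz 0) as [X | X]; auto. exfalso.
      nra. }
    apply (final G a u v sy ty sz tz al be); auto.
Qed.

Lemma main_aux (G l : pt -> Prop) a b c d n k :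
  (forall S : pt -> Prop, (forall x, S x -> G x) -> has_six_elements S -> csc_position S) ->
  tangent_line_at G a l -> n <> (0, 0) -> (forall x, l x <-> dot n x = k) ->
  (forall x, G x -> dot n x <= k) ->
  G b -> G c -> G d -> nondeg_parallelogram a b c d ->
  ~ dir_parallel (psub b a) l -> ~ dir_parallel (psub d a) l ->
  exists L, L c /\ lines_parallel L l /\ supporting_line G L.
Proof.
  intros H6 Htan nz Hl Hside Gb Gc Gd [Hp HD] Hu Hv.
  pose proof Htan as [Ga [_ [la _]]].
  apply Hl in la.
  remember (psub b a) as u eqn:Equ. remember (psub d a) as v eqn:Eqv.
  assert (Eb : b = P a u v 1 0) by (subst u v; destruct a, b; unfold P, psub; simpl; f_equal; ring).
  assert (Ed : d = P a u v 0 1) by (subst u v; destruct a, d; unfold P, psub; simpl; f_equal; ring).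
  assert (Ec : c = P a u v 1 1).
  { subst u v. destruct a, b, c, d. unfold psub in Hp. simpl in Hp. injection Hp as H1 H2.
    unfold P, psub; simpl; f_equal; lra. }
  assert (Hal : dot n u <> 0).
  { intro E. apply Hu. intros x Hx. apply Hl in Hx. apply Hl.
    unfold dot, padd in *; simpl in *. lra. }
  assert (Hbe : dot n v <> 0).
  { intro E. apply Hv. intros x Hx. apply Hl in Hx. apply Hl.
    unfold dot, padd in *; simpl in *. lra. }
  exists (fun x => dot n x = dot n c). split; [reflexivity|]. split.
  - split; [exists n, (dot n c); split; auto; reflexivity|].
    split; [exists n, k; split; auto|].
    exists (psub a c). intro x. rewrite Hl. unfold dot, padd, psub in *; simpl in *. split; intro; lra.
  - exists n, (dot n c). split; auto. split; [reflexivity|]. split; [exists c; split; auto; reflexivity|].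
    right. intros y Gy. destruct (Rle_or_lt (dot n c) (dot n y)) as [X | X]; auto. exfalso.
    destruct (coords_ex a u v y HD) as [sy [ty Ey]]. subst y.
    rewrite Eb in Gb. rewrite Ec in Gc, X. rewrite Ed in Gd.
    assert (al0 : dot n u < 0).
    { pose proof (Hside _ Gb) as Y. rewrite dot_P in Y. lra. }
    assert (be0 : dot n v < 0).
    { pose proof (Hside _ Gd) as Y. rewrite dot_P in Y. lra. }
    assert (sy > 1 \/ ty > 1).
    { rewrite !dot_P in X.
      destruct (Rlt_or_le 1 sy); auto. destruct (Rlt_or_le 1 ty); auto. exfalso.
      assert (A1 : 0 <= (1 - sy) * (- dot n u)) by (apply Rmult_le_pos; lra).
      assert (A2 : 0 <= (1 - ty) * (- dot n v)) by (apply Rmult_le_pos; lra).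
      replace ((1 - sy) * (- dot n u)) with (sy * dot n u - 1 * dot n u) in A1 by ring.
      replace ((1 - ty) * (- dot n v)) with (ty * dot n v - 1 * dot n v) in A2 by ring.
      lra. }
    destruct H as [H | H].
    + exact (key_st G l a u v n k sy ty H6 Htan Hl Hside HD Gb Gc Gd Hal Hbe Gy X H).
    + apply (key_st G l a v u n k ty sy H6 Htan Hl Hside); rewrite ?(P_swap a u v); auto.
      unfold cross in *; intro; apply HD; lra.
Qed.

Theorem mainTheorem9 (G : pt -> Prop) (a b c d : pt) (l : pt -> Prop) :
  simple_closed_curve G ->
  (forall S : pt -> Prop, (forall x, S x -> G x) -> has_six_elements S ->
     csc_position S) ->
  smooth_point G a ->
  tangent_line_at G a l ->
  G b -> G c -> G d ->
  nondeg_parallelogram a b c d ->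
  ~ dir_parallel (psub b a) l ->
  ~ dir_parallel (psub d a) l ->
  exists L, L c /\ lines_parallel L l /\ supporting_line G L.
Proof.
  intros _ H6 _ Htan Gb Gc Gd Hpar Hu Hv.
  pose proof Htan as [_ [[n [k [nz [Hl [_ [Hle | Hge]]]]]] _]].
  - exact (main_aux G l a b c d n k H6 Htan nz Hl Hle Gb Gc Gd Hpar Hu Hv).
  - apply (main_aux G l a b c d (- fst n, - snd n) (- k) H6 Htan); auto.
    + intro E. injection E as E1 E2. apply nz. destruct n; simpl in *. f_equal; lra.
    + intro x. rewrite Hl. unfold dot; simpl. split; intro; lra.
    + intros x Gx. specialize (Hge x Gx). unfold dot in *; simpl. lra.
Qed.
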